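(* Let $M\ge1$, $S=\{0,1,2,\dots\}^M$, $N(n)=\{u\in\{-1,0,1\}^M: n+u\in S\}$, and let $P$ be the transition matrix of a discrete-time random walk $R$ on $S$ with $P(n,n')>0$ only if $n'-n\in N(n)$, homogeneous with respect to a partition $C=\{C_k\}_{k\in K}$ of $S$ (index function $c$), and let $Z=\{Z_j\}_{j\in J}$ be a refinement of $C$ (index function $z$), all as in the context. Consider the optimization problem in the variables $\varphi_{j,u,d,v}$, indexed by $j\in J$, $u\in N_j$, $d\in N_{j,u}$, $v\in N_{c(j,d)}$: $$\min \sum_{j\in J}\sum_{u\in N_j}\sum_{d\in N_{j,u}}\sum_{v\in N_{c(j,d)}}\varphi_{j,u,d,v}$$ subject to, for all $j\in J$, $u\in N_j$, $d\in N_{j,u}$, $$\sum_{v\in N_{c(j,d)}}\mathbf{1}(d+v\in N_{j,u})\bigl[\varphi_{j,u,d+v,-v}-\varphi_{j,u,d,v}\bigr]=p_{c(j,u),d-u}-p_{j,d},$$ and $\varphi_{j,u,d,v}\ge 0$ for all indices. Then this problem has a finite number of variables and constraints and is feasible. Moreover, if $(\varphi_{j,u,d,v})$ is an optimal solution, then the numbers defined for $n,m\in S$, $u\in N_{c(n)}$, $v\in N_{c(m)}$ by $$\phi(n,u,m,v)=\begin{cases}\varphi_{z(n),u,m-n,v}, & \text{if } m-n\in N_{z(n),u}\text{ and } m+v-n\in N_{z(n),u},\\ 0, &\text{otherwise},\end{cases}$$ are nonnegative and satisfy, for all $n,m\in S$ and $u\in N_{c(n)}$, $$\sum_{v\in 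N_{c(m)}}\bigl[\phi(n,u,m+v,-v)-\phi(n,u,m,v)\bigr]=P(n+u,m)-P(n,m).$$
   Context: A family $C=\{C_k\}_{k\in K}$, with $K$ finite, is a partition of $S$ if its sets are pairwise disjoint, cover $S$, and $N(n)=N(n')$ for all $n,n'$ in the same $C_k$; this common set is denoted $N_k$, and $c(n)$ denotes the index $k$ with $n\in C_k$. The random walk $R$ is homogeneous with respect to $C$: $P(n,n+u)=p_{c(n),u}$ for $u\in N_{c(n)}$, depending on $n$ only through $c(n)$, and $P(n,n')=0$ if $n'-n\notin N(n)$. A refinement $Z=\{Z_j\}_{j\in J}$ of $C$ is a partition of $S$ in the same sense, with finite index set $J$, index function $z$ and common transition sets $N_j$, such that for every $j\in J$ and $u\in N_j$, $c(n+u)$ is the same for all $n\in Z_j$; this common index is denoted $c(j,u)$. $R$ is then also homogeneous with respect to $Z$, and $p_{j,d}$ denotes $P(n,n+d)$ for $n\in Z_j$ (equal to $0$ if $d\notin N_j$). For $j\in J$, $u\in N_j$, let $N_{j,u}=N_j\cup(u+N_{c(j,u)})$. It is assumed (as presupposed by the notation) that for $d\in N_{j,u}$ the index $c(n+d)$ is the same for all $n\in Z_j$; it is denoted $c(j,d)$. Finally $p_{c(j,u),d-u}$ denotes $P(n+u,n+d)$ for $n\in Z_j$ (equal to $0$ if $d-u\notin N_{c(j,u)}$). *)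

(* Defs.v *)
From HB Require Import structures.
From mathcomp Require Import all_boot all_order all_algebra.
Set Implicit Arguments. Unset Strict Implicit. Unset Printing Implicit Defensive.
Import Order.TTheory GRing.Theory Num.Theory.
Local Open Scope ring_scope.

Definition vec (M : nat) := {ffun 'I_M -> int}.

Definition inS (M : nat) (n : vec M) : bool := [forall i, (0 <= n i)%R].

Definition dirs (M : nat) : seq (vec M) :=
  [seq [ffun i => ((nat_of_ord (f i))%:Z - 1)%R] | f : {ffun 'I_M -> 'I_3} <- enum {ffun 'I_M -> 'I_3}].

Definition Nset (M : nat) (n : vec M) : seq (vec M) :=
  [seq u <- dirs M | inS (n + u)].

(* For n in Z_j and u in N_j:  N_{j,u} = N_j U (u + N_{c(j,u)})
   where N_j = N(n) and N_{c(j,u)} = N(n+u). *)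
Definition Nju (M : nat) (n u : vec M) : seq (vec M) :=
  undup (Nset n ++ [seq u + w | w <- Nset (n + u)]).

(* Partition of S with index function c and finite index set K:
   common transition set on each class. *)
Definition is_partition (M : nat) (K : finType) (c : vec M -> K) : Prop :=
  forall n n', inS n -> inS n' -> c n = c n' -> Nset n =i Nset n'.

Definition is_refinement (M : nat) (K J : finType) (c : vec M -> K) (z : vec M -> J)
  : Prop :=
  is_partition z /\
  forall n n', inS n -> inS n' -> z n = z n' ->
    forall u, u \in Nset n -> c (n + u) = c (n' + u).

Definition cjd_well_defined (M : nat) (K J : finType) (c : vec M -> K) (z : vec M -> J)
  : Prop :=
  forall n n', inS n -> inS n' -> z n = z n' ->
    forall u, u \in Nset n -> forall d, d \in Nju n u -> c (n + d) = c (n' + d).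

Definition homogeneous_walk (R : realFieldType) (M : nat) (K : finType)
  (c : vec M -> K) (p : K -> vec M -> R) (P : vec M -> vec M -> R) : Prop :=
  [/\ (forall n n', inS n -> inS n' -> 0 <= P n n'),
      (forall n n', inS n -> inS n' -> (n' - n) \notin Nset n -> P n n' = 0),
      (forall n, inS n -> \sum_(u <- Nset n) P n (n + u) = 1) &
      (forall n u, inS n -> u \in Nset n -> P n (n + u) = p (c n) u)].

(* Class-level quantities of the refinement, read off a representative
   rep j of Z_j (the value does not depend on the representative). *)
Section LP.
Variables (R : realFieldType) (M : nat) (J : finType)
  (rep : J -> vec M) (P : vec M -> vec M -> R).

Definition N_j (j : J) : seq (vec M) := Nset (rep j).
Definition N_ju (j : J) (u : vec M) : seq (vec M) := Nju (rep j) u.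
Definition N_cjd (j : J) (d : vec M) : seq (vec M) := Nset (rep j + d).
Definition p_jd (j : J) (d : vec M) : R := P (rep j) (rep j + d).
(* p_{c(j,u),d-u} = P(n+u, n+d) for n in Z_j *)
Definition p_cju (j : J) (u d : vec M) : R := P (rep j + u) (rep j + d).

Definition var_index (j : J) (u d v : vec M) : bool :=
  [&& u \in N_j j, d \in N_ju j u & v \in N_cjd j d].

Definition cstr_index (j : J) (u d : vec M) : bool :=
  (u \in N_j j) && (d \in N_ju j u).

Definition objective (phi : J -> vec M -> vec M -> vec M -> R) : R :=
  \sum_(j : J) \sum_(u <- N_j j) \sum_(d <- N_ju j u) \sum_(v <- N_cjd j d)
     phi j u d v.

Definition feasible (phi : J -> vec M -> vec M -> vec M -> R) : Prop :=
  (forall j u d, cstr_index j u d ->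
     \sum_(v <- N_cjd j d)
        (if d + v \in N_ju j u then phi j u (d + v) (- v) - phi j u d v else 0)
     = p_cju j u d - p_jd j d)
  /\ (forall j u d v, var_index j u d v -> 0 <= phi j u d v).

Definition optimal (phi : J -> vec M -> vec M -> vec M -> R) : Prop :=
  feasible phi /\ forall psi, feasible psi -> objective phi <= objective psi.

Definition phi_ext (z : vec M -> J) (phi : J -> vec M -> vec M -> vec M -> R)
  (n u m v : vec M) : R :=
  if (m - n \in N_ju (z n) u) && (m + v - n \in N_ju (z n) u)
  then phi (z n) u (m - n) v else 0.

End LP.

(* Main.v *)
Require Import Defs.
From HB Require Import structures.
From mathcomp Require Import all_boot all_order all_algebra.
From mathcomp Require Import ring.
Import Order.TTheory GRing.Theory Num.Theory.
Local Open Scope ring_scope.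
Set Implicit Arguments. Unset Strict Implicit. Unset Printing Implicit Defensive.

Lemma dirs_uniq M : uniq (dirs M).
Proof.
rewrite map_inj_uniq ?enum_uniq // => f g /ffunP H; apply/ffunP => i.
move: (H i); rewrite !ffunE => /addIr [] /val_inj.
done.
Qed.

Lemma dirs0 M : (0 : vec M) \in dirs M.
Proof.
apply/mapP; exists [ffun=> (1 : 'I_3)%R]; first by rewrite mem_enum.
by apply/ffunP => i; rewrite !ffunE.
Qed.

Lemma dirsN M (v : vec M) : v \in dirs M -> - v \in dirs M.
Proof.
case/mapP => f _ ->; apply/mapP; exists [ffun i => rev_ord (f i)]; first by rewrite mem_enum.
apply/ffunP => i; rewrite !ffunE /=.
by case: (f i) => [[|[|[|k]]]] //=.
Qed.

Lemma mem_Nset M (n v : vec M) : (v \in Nset n) = inS (n + v) && (v \in dirs M).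
Proof. by rewrite mem_filter. Qed.

Lemma mem_Nju M (n u d : vec M) :
  (d \in Nju n u) = (d \in Nset n) || (d \in [seq u + w | w <- Nset (n + u)]).
Proof. by rewrite mem_undup mem_cat. Qed.

Lemma Nset_sub_Nju M (n u d : vec M) : d \in Nset n -> d \in Nju n u.
Proof. by rewrite mem_Nju => ->. Qed.

Lemma Nju_u M (n u w : vec M) : w \in Nset (n + u) -> u + w \in Nju n u.
Proof. by move=> h; rewrite mem_Nju map_f ?orbT. Qed.

Lemma Nju_inS M (n u d : vec M) : d \in Nju n u -> inS (n + d).
Proof.
rewrite mem_Nju => /orP [|/mapP [w]]; first by rewrite mem_Nset => /andP [].
by rewrite mem_Nset => /andP [h _] ->; rewrite addrA.
Qed.

Lemma Nset_eq M (a b : vec M) : Nset a =i Nset b -> Nset a = Nset b.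
Proof.
move=> h; apply: eq_in_filter => v vd.
by move: (h v); rewrite !mem_Nset vd !andbT.
Qed.

Lemma zero_Nset M (n : vec M) : inS n -> 0 \in Nset n.
Proof. by move=> h; rewrite mem_Nset addr0 h dirs0. Qed.

Lemma neg_Nset M (n v : vec M) : inS n -> v \in Nset n -> - v \in Nset (n + v).
Proof. by move=> h0; rewrite !mem_Nset addrK h0 => /andP [_ h2]; rewrite dirsN. Qed.

Lemma sum_if1 (R : realFieldType) (T : eqType) (s : seq T) (C : pred T) (x : T) (a : R) :
  uniq s ->
  \sum_(v <- s) (if C v then (if v == x then a else 0) else 0) =
  if (x \in s) && C x then a else 0.
Proof.
move=> us.
rewrite (eq_bigr (fun v => if v == x then (if C x then a else 0) else 0)); last first.
  move=> v _; case: eqP => [->|_]; [by rewrite ?eqxx; case: (C x) | by case: (C v)].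
case xs: (x \in s) => /=.
  rewrite (bigD1_seq x) //= eqxx big1 ?addr0 // => v /negbTE -> //.
apply: big1_seq => v /andP [_ vs]; case: eqP => // e; subst.
by rewrite vs in xs.
Qed.

Lemma eq_shift (V : zmodType) (d v u : V) : (d + v == u) = (v == u - d).
Proof.
by apply/eqP/eqP => h; [rewrite -h addrC addKr | rewrite h addrC subrK].
Qed.

Lemma uniq_Nset M (n : vec M) : uniq (Nset n).
Proof. exact/filter_uniq/dirs_uniq. Qed.

Section Walk.
Variables (R : realFieldType) (M : nat) (K : finType) (c : vec M -> K)
  (p : K -> vec M -> R) (P : vec M -> vec M -> R).
Hypothesis hP : homogeneous_walk c p P.

Lemma P_zero n m : inS n -> inS m -> m - n \notin Nset n -> P n m = 0.
Proof. by case: hP => _ h _ _; exact: h. Qed.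

Lemma sum_Nset_P n : inS n -> \sum_(v <- Nset n) P n (n + v) = 1.
Proof. by case: hP => _ _ h _; exact: h. Qed.

Lemma P_ge0 n m : inS n -> inS m -> 0 <= P n m.
Proof. by case: hP => h _ _ _; exact: h. Qed.

Lemma Pshift a b e : is_partition c -> inS a -> inS b -> c a = c b ->
  inS (a + e) -> inS (b + e) -> P a (a + e) = P b (b + e).
Proof.
move=> hc ha hb hab hae hbe; have hN := hc a b ha hb hab.
case: hP => _ _ _ h4.
case: (boolP (e \in Nset a)) => he.
  by rewrite h4 // h4 ?hab // -hN.
rewrite !P_zero // ?[_ - a]addrC ?[_ - b]addrC ?addKr // -hN //.
Qed.

Definition phi0 (J : finType) (rep : J -> vec M) (j : J) (u d v : vec M) : R :=
  (if v == - d then P (rep j) (rep j + d) else 0)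
  + (if (d == 0) && (v == u) then 1 else 0)
  + (if d == u then P (rep j + u) (rep j + (u + v)) else 0).

Lemma feas_phi0 (J : finType) (rep : J -> vec M) :
  (forall j, inS (rep j)) -> feasible rep P (phi0 rep).
Proof.
move=> hrep; split; last first.
  move=> j u d v /and3P [hu hd hv]; rewrite /phi0.
  have hr := hrep j; have hru : inS (rep j + u) by move: hu; rewrite /N_j mem_Nset => /andP [].
  apply: addr_ge0; first apply: addr_ge0.
  - case: ifP => _ //; apply: P_ge0 => //; exact: Nju_inS hd.
  - by case: ifP.
  - case: ifP => // /eqP e; subst d; apply: P_ge0 => //.
    by move: hv; rewrite /N_cjd mem_Nset addrA => /andP [].
move=> j u d /andP [hu hd]; rewrite /N_cjd /p_cju /p_jd.
move: hu hd; rewrite /N_j /N_ju; set r := rep j => hu hd.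
have hr : inS r := hrep j.
have hru : inS (r + u) by move: hu; rewrite mem_Nset => /andP [].
have hrd : inS (r + d) := Nju_inS hd.
set C := fun v => d + v \in Nju r u.
set in1 := \sum_(v <- Nset (r + d)) (if C v then (if - v == - (d + v) then P r (r + (d + v)) else 0) else 0).
set in2 := \sum_(v <- Nset (r + d)) (if C v then (if (d + v == 0) && (- v == u) then (1 : R) else 0) else 0).
set in3 := \sum_(v <- Nset (r + d)) (if C v then (if d + v == u then P (r + u) (r + (u + - v)) else 0) else 0).
set out1 := \sum_(v <- Nset (r + d)) (if C v then (if v == - d then P r (r + d) else 0) else 0).
set out2 := \sum_(v <- Nset (r + d)) (if C v then (if (d == 0) && (v == u) then (1 : R) else 0) else 0).
set out3 := \sum_(v <- Nset (r + d)) (if C v then (if d == u then P (r + u) (r + (u + v)) else 0) else 0).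
have -> : \sum_(v <- Nset (r + d)) (if d + v \in Nju r u then phi0 rep j u (d + v) (- v) - phi0 rep j u d v else 0)
   = (in1 + in2 + in3) - (out1 + out2 + out3).
  rewrite /in1 /in2 /in3 /out1 /out2 /out3 -!big_split -sumrB /=; apply: eq_bigr => v _.
  by rewrite /phi0 /C; case: ifP => _; rewrite ?addr0 ?subr0.
have h0 : (0 : vec M) \in Nju r u by apply/Nset_sub_Nju/zero_Nset.
have huN : u \in Nju r u by apply/Nset_sub_Nju.
have -> : in1 = if d == 0 then 1 else 0.
  rewrite /in1 /C; case: eqP => [->|d0].
    rewrite -[RHS](sum_Nset_P hr) addr0 !big_seq; apply: eq_bigr => v hv.
    by rewrite add0r eqxx Nset_sub_Nju.
  apply: big1 => v _; case: ifP => // _; case: eqP => // /oppr_inj e.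
  by case: d0; apply: (addIr v); rewrite add0r -e.
have -> : out1 = P r (r + d).
  rewrite /out1 /C sum_if1 ?uniq_Nset // subrr h0 andbT.
  case: ifP => // hn; rewrite P_zero //.
  rewrite [_ - r]addrC addKr; apply/negP => hdr.
  by move: (neg_Nset hr hdr); rewrite hn.
have -> : in2 = if d == u then 1 else 0.
  rewrite /in2 /C; case: eqP => [->|du].
    rewrite (eq_bigr (fun v => if u + v \in Nju r u then (if v == - u then (1 : R) else 0) else 0)).
      by rewrite sum_if1 ?uniq_Nset // neg_Nset // subrr h0.
    move=> v _; rewrite eqr_oppLR; case: (v =P - u) => [->|]; by rewrite ?andbF ?subrr ?eqxx.
  apply: big1 => v _; rewrite eqr_oppLR; case: (v =P - u) => [->|]; rewrite ?andbF ?if_same //.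
  by rewrite subr_eq0 andbT; case: (d =P u) => [/du []|]; rewrite if_same.
have -> : out2 = if d == 0 then 1 else 0.
  rewrite /out2 /C; case: eqP => [->|d0] /=.
    by rewrite sum_if1 ?uniq_Nset // addr0 hu add0r huN.
  by apply: big1 => v _; rewrite if_same.
have -> : in3 = P (r + u) (r + d).
  rewrite /in3 /C.
  rewrite (eq_bigr (fun v => if d + v \in Nju r u then (if v == u - d then P (r + u) (r + d) else 0) else 0)); last first.
    move=> v _; rewrite eq_shift; case: (v =P u - d) => [->|] //.
    by rewrite opprB [u + (_ - _)]addrC subrK.
  rewrite sum_if1 ?uniq_Nset //= [d + _]addrC subrK huN andbT.
  case: ifP => // hn; rewrite P_zero //.
  have e1 : (r + d) - (r + u) = d - u by rewrite opprD addrACA subrr add0r.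
  rewrite e1; apply/negP => hdr.
  move: (neg_Nset hru hdr); rewrite opprB -addrA [u + (_ - _)]addrC subrK hn //.
have -> : out3 = if d == u then 1 else 0.
  rewrite /out3 /C; case: eqP => [->|du].
    rewrite -[RHS](sum_Nset_P hru) !big_seq; apply: eq_bigr => v hv.
    by rewrite Nju_u // addrA.
  by apply: big1 => v _; rewrite if_same.
ring.
Qed.
End Walk.

Lemma zm1 (V : zmodType) (u m n : V) : u + (m - (n + u)) = m - n.
Proof. by rewrite opprD addrCA [u + _]addrC subrK. Qed.

Lemma zm2 (V : zmodType) (x y u : V) : x + u + (y - u) = x + y.
Proof. by rewrite -addrA [u + _]addrC subrK. Qed.

Lemma zm3 (V : zmodType) (n m : V) : n + (m - n) = m.
Proof. by rewrite addrC subrK. Qed.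

Unset Implicit Arguments.
Theorem theorem3 (R : realFieldType) (M : nat) (K J : finType)
  (c : vec M -> K) (z : vec M -> J) (p : K -> vec M -> R)
  (P : vec M -> vec M -> R) (rep : J -> vec M) :
  (0 < M)%N ->
  is_partition c ->
  is_refinement c z ->
  cjd_well_defined c z ->
  homogeneous_walk c p P ->
  (forall j, inS (rep j) /\ z (rep j) = j) ->
  (* finitely many variables and constraints *)
  ((exists s : seq (J * vec M * vec M * vec M),
      forall j u d v, var_index rep j u d v -> (j, u, d, v) \in s) /\
   (exists s : seq (J * vec M * vec M),
      forall j u d, cstr_index rep j u d -> (j, u, d) \in s)) /\
  (* feasibility *)
  (exists phi, feasible rep P phi) /\
  (* properties of the extension of an optimal solution *)
  (forall phi, optimal rep P phi ->
     (forall n m u v, inS n -> inS m -> u \in Nset n -> v \in Nset m ->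
        0 <= phi_ext rep z phi n u m v) /\
     (forall n m u, inS n -> inS m -> u \in Nset n ->
        \sum_(v <- Nset m)
          (phi_ext rep z phi n u (m + v) (- v) - phi_ext rep z phi n u m v)
        = P (n + u) m - P n m)).
Proof.
move=> _ hc [hzp hzr] hw hP hrep.
split; [split|split].
- exists [seq (q, v) | q <- [seq (q', d) | q' <- [seq (j, u) | j <- enum J, u <- N_j rep j],
                              d <- N_ju rep q'.1 q'.2], v <- N_cjd rep q.1.1 q.2].
  move=> j u d v /and3P [hu hd hv].
  apply/allpairsPdep; exists (j, u, d), v; split => //.
  apply/allpairsPdep; exists (j, u), d; split => //.
  by apply/allpairsPdep; exists j, u; rewrite mem_enum.
- exists [seq (q', d) | q' <- [seq (j, u) | j <- enum J, u <- N_j rep j],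
                              d <- N_ju rep q'.1 q'.2].
  move=> j u d /andP [hu hd].
  apply/allpairsPdep; exists (j, u), d; split => //.
  by apply/allpairsPdep; exists j, u; rewrite mem_enum.
- exists (phi0 P rep); apply: (feas_phi0 hP) => j; exact: (hrep j).1.
move=> phi [[hcstr hnn] _].
have setup : forall n u, inS n -> u \in Nset n ->
    inS (rep (z n)) /\ Nset n =i Nset (rep (z n)) /\ inS (n + u) /\ inS (rep (z n) + u) /\
        c n = c (rep (z n)) /\ Nju n u =i Nju (rep (z n)) u.
  move=> n u hn hu; have [hr hzr'] := hrep (z n).
  have hNn := hzp n _ hn hr (esym hzr').
  have hnu : inS (n + u) by move: hu; rewrite mem_Nset => /andP [].
  have hru : inS (rep (z n) + u) by move: hu; rewrite hNn mem_Nset => /andP [].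
  have hcn : c n = c (rep (z n)).
    by have := hzr n _ hn hr (esym hzr') 0 (zero_Nset hn); rewrite !addr0.
  have hcu := hzr n _ hn hr (esym hzr') u hu.
  have hNu := hc _ _ hnu hru hcu.
  do 5!split => //; move=> d; rewrite !mem_Nju hNn; congr (_ || _); exact: eq_mem_map.
split.
  move=> n m u v hn hm hu hv; rewrite /phi_ext; case: ifP => // /andP [h1 h2]; apply: hnn.
  have [hr [hNn _]] := setup n u hn hu.
  apply/and3P; split => //; first by rewrite /N_j -hNn.
  rewrite /N_cjd mem_Nset; move: hv; rewrite mem_Nset => /andP [_ ->]; rewrite andbT.
  suff -> : rep (z n) + (m - n) + v = rep (z n) + (m + v - n) by exact: Nju_inS h2.
  by rewrite -addrA [m - n + v]addrAC.
move=> n m u hn hm hu.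
have [hr [hNn [hnu [hru [hcn hNju]]]]] := setup n u hn hu.
set j := z n; set r := rep j.
case hd: (m - n \in N_ju rep j u).
  have hrd : inS (r + (m - n)) := Nju_inS hd.
  have hNm : Nset m = N_cjd rep j (m - n).
    apply: Nset_eq; apply: hc => //.
    have := hw n r hn hr (esym (hrep j).2) u hu (m - n); rewrite zm3 => -> //.
    by rewrite hNju.
  transitivity (\sum_(v <- N_cjd rep j (m - n))
     (if m - n + v \in N_ju rep j u then phi j u (m - n + v) (- v) - phi j u (m - n) v else 0)).
    rewrite hNm; apply: eq_bigr => v _; rewrite /phi_ext -/j hd /= addrK hd andbT.
    by rewrite [m + v - n]addrAC; case: ifP; rewrite ?subr0.
  rewrite hcstr; last by rewrite /cstr_index /N_j -/r -hNn hu.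
  rewrite /p_cju /p_jd -/r.
  congr (_ - _).
    rewrite -(zm2 r (m - n) u) -{2}(zm3 n m) -(zm2 n (m - n) u).
    apply: (Pshift hP hc) => //; rewrite ?zm2 ?zm3 //.
    exact: esym (hzr n _ hn hr (esym (hrep j).2) u hu).
  by rewrite -{2}(zm3 n m); apply: (Pshift hP hc) => //; rewrite ?zm3 // esym.
rewrite big1; last first.
  move=> v _; rewrite /phi_ext -/j hd /= addrK hd andbF /=.
  by rewrite subrr.
rewrite !(P_zero hP) ?subrr //.
  apply/negP => h; move: hd; rewrite /N_ju -/r -hNju.
  by rewrite Nset_sub_Nju.
apply/negP => h; move: hd; rewrite /N_ju -/r -hNju.
by have := Nju_u h; rewrite zm1 => ->.
Qed.
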